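(* For any integer $p\ge2$ and any partition $\lambda$ with $p$-core $\bar\lambda$, the ratio $H_{\text{non-}p\text{-fold}}(\lambda)/H(\bar\lambda)$ is an integer.
   Context: For a partition $\lambda$, the hook length of a box of its Young diagram is the number of boxes to its right in its row plus the number below it in its column plus one; $H(\lambda)$ is the product of all hook lengths and $H_{\text{non-}p\text{-fold}}(\lambda)$ the product of the hook lengths not divisible by $p$. A border strip of size $p$ is a connected skew Young diagram with $p$ boxes containing no $2\times2$ square; the $p$-core $\bar\lambda$ is the partition obtained from $\lambda$ by repeatedly removing border strips of size $p$ (keeping a Young diagram after each removal) until no removal is possible; it is independent of the choices. *)

(* Defs.v *)
From Stdlib Require Import Relations.
From mathcomp Require Import all_boot.
Set Implicit Arguments. Unset Strict Implicit. Unset Printing Implicit Defensive.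

Definition is_partition (la : seq nat) : bool :=
  sorted geq la && all (fun x => 0 < x) la.

(* Part i (0-indexed), 0 beyond the length. *)
Definition part (la : seq nat) (i : nat) : nat := nth 0 la i.

(* Conjugate part: length of column j (0-indexed). *)
Definition conj_part (la : seq nat) (j : nat) : nat := count (fun x => j < x) la.

(* Box (i,j) (row i, column j, 0-indexed) of the Young diagram. *)
Definition in_diagram (la : seq nat) (c : nat * nat) : bool :=
  c.2 < part la c.1.

(* Hook length of box (i,j): arm + leg + 1. *)
Definition hook (la : seq nat) (i j : nat) : nat :=
  (part la i - j.+1) + (conj_part la j - i.+1) + 1.

Definition Hprod (la : seq nat) : nat :=
  \prod_(i < size la) \prod_(j < part la i) hook la i j.

Definition Hnonp (p : nat) (la : seq nat) : nat :=
  \prod_(i < size la) \prod_(j < part la i | ~~ (p %| hook la i j)) hook la i j.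

Definition in_skew (la mu : seq nat) (c : nat * nat) : bool :=
  in_diagram la c && ~~ in_diagram mu c.

Definition adjacent (a b : nat * nat) : Prop :=
  (a.1 = b.1 /\ (a.2.+1 = b.2 \/ b.2.+1 = a.2)) \/
  (a.2 = b.2 /\ (a.1.+1 = b.1 \/ b.1.+1 = a.1)).

Definition connected_cells (S : nat * nat -> bool) : Prop :=
  forall a b, S a -> S b ->
    clos_refl_trans (nat * nat) (fun x y => S x /\ S y /\ adjacent x y) a b.

Definition no_2x2 (S : nat * nat -> bool) : Prop :=
  forall i j, ~ (S (i, j) /\ S (i.+1, j) /\ S (i, j.+1) /\ S (i.+1, j.+1)).

Definition border_strip (p : nat) (la mu : seq nat) : Prop :=
  (forall i, part mu i <= part la i) /\
  \sum_(i < size la) (part la i - part mu i) = p /\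
  connected_cells (in_skew la mu) /\
  no_2x2 (in_skew la mu).

Definition remove_strip (p : nat) (la mu : seq nat) : Prop :=
  is_partition mu /\ border_strip p la mu.

Definition is_pcore (p : nat) (la c : seq nat) : Prop :=
  clos_refl_trans (seq nat) (remove_strip p) la c /\
  ~ (exists mu, remove_strip p c mu).

(* Main.v *)
Require Import Defs.
From Stdlib Require Import Relations.
From mathcomp Require Import all_boot zify.
Set Implicit Arguments. Unset Strict Implicit. Unset Printing Implicit Defensive.
Arguments part : simpl never.


Section Basics.
Variable la : seq nat.
Hypothesis Hla : is_partition la.

Lemma part_size r : size la <= r -> part la r = 0.
Proof. by move=> H; rewrite /part nth_default. Qed.

Lemma part_pos r : r < size la -> 0 < part la r.
Proof.
move=> H; case/andP: Hla => _ /allP A; apply: A; exact: mem_nth.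
Qed.

Lemma part_mono r r' : r <= r' -> part la r' <= part la r.
Proof.
move=> H; case: (ltnP r' (size la)) => H'; last by rewrite part_size.
case/andP: Hla => S _.
have := @sorted_leq_nth nat geq (fun a b c (h1 : a <= b) (h2 : c <= a) => leq_trans h2 h1) (@leqnn) 0 la S r r'.
rewrite !inE; apply => //; exact: leq_ltn_trans H H'.
Qed.

Lemma conjP i j : (i < conj_part la j) = (j < part la i).
Proof.
move: Hla i; rewrite /conj_part /part /is_partition.
elim: la => [|x s IH]; first by move=> _ i; rewrite nth_nil.
move=> /= /andP [Hp /andP [Hx Hs]] i.
have Hss : is_partition s.
  by rewrite /is_partition Hs (path_sorted Hp).
have Ax : all (fun y => y <= x) s.
  have := order_path_min (fun a b c (h1 : a <= b) (h2 : c <= a) => leq_trans h2 h1) Hp.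
  by [].
case: (ltnP j x) => Hjx /=.
  case: i => [|i] //=; rewrite add1n ltnS; exact: IH.
have C0 : count (fun y => j < y) s = 0.
  apply/eqP; rewrite -leqn0 leqNgt -has_count; apply/hasPn => y Hy.
  by rewrite -leqNgt; apply: leq_trans Hjx; move/allP: Ax; apply.
have Ejx : (j < x) = false by rewrite ltnNge Hjx.
rewrite C0 /=; case: i => [|i] /=; first by rewrite Ejx.
case: (ltnP i (size s)) => Hi.
  have : nth 0 s i <= x by move/allP: Ax; apply; apply: mem_nth.
  move=> H1; symmetry; apply/negbTE; rewrite -leqNgt; exact: leq_trans H1 Hjx.
by rewrite nth_default.
Qed.

Lemma conj_size j : conj_part la j <= size la.
Proof. exact: count_size. Qed.

Lemma conj_mono j j' : j <= j' -> conj_part la j' <= conj_part la j.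
Proof. move=> H; apply: sub_count => x /= Hx; exact: leq_ltn_trans H Hx. Qed.

End Basics.

Definition beta N la r := part la r + (N - r.+1).
Definition bseq N la := map (beta N la) (iota 0 N).
Definition gapf N la j := j + (N - conj_part la j).
Definition gaps N la i := [seq g <- iota 0 (beta N la i) | g \notin bseq N la].
Definition hrow la i := [seq hook la i j | j <- iota 0 (part la i)].
Definition hl N la := flatten [seq hrow la i | i <- iota 0 N].

Lemma count_mem_iota (s : seq nat) x : uniq s ->
  count (mem s) (iota 0 x) = count (fun y => y < x) s.
Proof.
move=> Us; rewrite -!size_filter; apply: perm_size; apply: uniq_perm.
- by apply: filter_uniq; apply: iota_uniq.
- exact: filter_uniq.
by move=> y; rewrite !mem_filter mem_iota /= add0n andbC.
Qed.

Lemma count_gt_iota i N : count (fun r => i < r) (iota 0 N) = N - i.+1.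
Proof.
elim: N => [|N IH] //; rewrite -[N.+1]addn1 iotaD count_cat IH /=; lia.
Qed.

Section Beta.
Variables (la : seq nat) (N : nat).
Hypothesis Hla : is_partition la.
Hypothesis HN : size la <= N.

Local Notation lam := (part la).
Local Notation con := (conj_part la).
Local Notation bt := (beta N la).
Local Notation B := (bseq N la).

Lemma beta_lt r r' : r < r' -> r' < N -> bt r' < bt r.
Proof.
move=> H1 H2; rewrite /beta; have := part_mono Hla (ltnW H1); lia.
Qed.

Lemma beta_ltE r r' : r < N -> r' < N -> (bt r' < bt r) = (r < r').
Proof.
move=> H1 H2; case: (ltnP r r') => H.
  exact: beta_lt.
apply/negbTE; rewrite -leqNgt; move: H; rewrite leq_eqVlt => /orP [/eqP ->|H] //.
exact: ltnW (beta_lt H H1).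
Qed.

Lemma uniq_B : uniq B.
Proof.
rewrite map_inj_in_uniq ?iota_uniq // => r r'; rewrite !mem_iota /= => H1 H2 E.
case: (ltngtP r r') => // H.
  by have := beta_lt H H2; rewrite E ltnn.
by have := beta_lt H H1; rewrite E ltnn.
Qed.

Lemma memB x : (x \in B) = has (fun r => bt r == x) (iota 0 N).
Proof.
apply/mapP/hasP => [[r Hr ->]|[r Hr /eqP <-]]; by exists r.
Qed.

Lemma gap_notin j : gapf N la j \notin B.
Proof.
rewrite memB; apply/hasPn => r; rewrite mem_iota /= => Hr.
have Hc := conj_size la j.
rewrite /beta /gapf; case: (ltnP r (con j)) => H.
  have H' := H; rewrite (conjP Hla) in H'; move: H H'; lia.
have : ~~ (j < lam r) by rewrite -(conjP Hla) -leqNgt.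
lia.
Qed.

Lemma hook_gap i j : j < lam i -> hook la i j + gapf N la j = bt i.
Proof.
move=> H; have Hi : i < con j by rewrite (conjP Hla).
have Hc := conj_size la j.
rewrite /hook /beta /gapf; lia.
Qed.

Lemma gapf_lt j j' : j < j' -> gapf N la j < gapf N la j'.
Proof.
move=> H; have := conj_mono la (ltnW H); have := conj_size la j; rewrite /gapf; lia.
Qed.

Lemma gapf_inj : injective (gapf N la).
Proof.
move=> j j' E; case: (ltngtP j j') => // H.
  by have := gapf_lt H; rewrite E ltnn.
by have := gapf_lt H; rewrite E ltnn.
Qed.

Lemma size_gaps i : i < N -> size (gaps N la i) = lam i.
Proof.
move=> Hi; rewrite /gaps size_filter.
have E1 : count (mem B) (iota 0 (bt i)) = N - i.+1.
  rewrite count_mem_iota ?uniq_B // /B count_map.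
  rewrite (@eq_in_count _ _ (fun r => i < r)) ?count_gt_iota //.
  move=> r; rewrite mem_iota /= => Hr; exact: (beta_ltE Hi Hr).
have E2 := count_predC (mem B) (iota 0 (bt i)).
have E3 : count (fun g => g \notin B) (iota 0 (bt i)) =
          count (predC (mem B)) (iota 0 (bt i)) by [].
rewrite E3; rewrite size_iota E1 in E2; move: E2; rewrite /beta; lia.
Qed.

Lemma perm_gaps i : i < N ->
  perm_eq (map (gapf N la) (iota 0 (lam i))) (gaps N la i).
Proof.
move=> Hi.
have U1 : uniq (map (gapf N la) (iota 0 (lam i))).
  by rewrite map_inj_uniq ?iota_uniq //; exact: gapf_inj.
have Sub : {subset map (gapf N la) (iota 0 (lam i)) <= gaps N la i}.
  move=> g /mapP [j]; rewrite mem_iota /= => Hj ->.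
  rewrite mem_filter gap_notin mem_iota /=.
  have := hook_gap Hj; rewrite /hook; lia.
have H3 : size (gaps N la i) <= size (map (gapf N la) (iota 0 (lam i))).
  by rewrite size_gaps // size_map size_iota.
have [Es Em] := uniq_min_size U1 Sub H3.
apply: uniq_perm => //; rewrite /gaps; apply: filter_uniq; exact: iota_uniq.
Qed.

Lemma hrow_perm i : i < N ->
  perm_eq (hrow la i) (map (fun g => bt i - g) (gaps N la i)).
Proof.
move=> Hi; apply: perm_trans (perm_map _ (perm_gaps Hi)).
rewrite -map_comp /hrow.
suff -> : [seq hook la i j | j <- iota 0 (lam i)] =
   map ((fun g => bt i - g) \o gapf N la) (iota 0 (lam i)) by [].
apply/eq_in_map => j; rewrite mem_iota /= => Hj.
have := hook_gap Hj; rewrite /=; lia.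
Qed.

Lemma count_hrow i h : i < N -> 0 < h ->
  count (pred1 h) (hrow la i) = ((h <= bt i) && (bt i - h \notin B)).
Proof.
move=> Hi Hh; rewrite (permP (hrow_perm Hi)) count_map /gaps count_filter.
case: (boolP ((h <= bt i) && (bt i - h \notin B))) => C.
  rewrite (@eq_in_count _ _ (pred1 (bt i - h))).
    rewrite count_uniq_mem ?iota_uniq // mem_iota /=; move/andP: C => [C1 _]; lia.
  move=> g; rewrite mem_iota /= => Hg; rewrite /preim /predI /=.
  case: (eqVneq g (bt i - h)) => [->|Ne]; first by move/andP: C => [C1 ->]; apply/eqP; lia.
  apply/negbTE; apply/negP => /andP [/eqP E _]; move: Ne; rewrite -E; lia.
apply/eqP; rewrite /= eqn0Ngt -has_count; apply/hasPn => g; rewrite mem_iota /= => Hg.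
rewrite /preim /predI /=; apply/negP => /andP [/eqP E Hn]; move: C.
have -> : bt i - h = g by lia.
by rewrite Hn andbT; lia.
Qed.

Lemma count_hl h : 0 < h ->
  count (pred1 h) (hl N la) = count (fun x => (h <= x) && (x - h \notin B)) B.
Proof.
move=> Hh; rewrite /hl count_flatten -map_comp /B count_map -sumn_count.
congr sumn; apply/eq_in_map => i; rewrite mem_iota /= => Hi.
by rewrite /= count_hrow.
Qed.

Lemma hl_pos x : x \in hl N la -> 0 < x.
Proof.
move/flattenP => [r /mapP [i _ ->]] /mapP [j _ ->]; rewrite /hook; lia.
Qed.

End Beta.

Lemma crt_sym (T : Type) (R : relation T) x y :
  (forall a b, R a b -> R b a) -> clos_refl_trans T R x y -> clos_refl_trans T R y x.
Proof.
move=> Hs; elim=> [a b Hab|a|a b c _ IH1 _ IH2].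
- by apply: rt_step; apply: Hs.
- exact: rt_refl.
- exact: rt_trans IH2 IH1.
Qed.

Lemma cross (S : nat * nat -> bool) a b :
  clos_refl_trans _ (fun x y => S x /\ S y /\ adjacent x y) a b ->
  forall r, (a.1 <= r < b.1) \/ (b.1 <= r < a.1) -> exists c, S (r, c) /\ S (r.+1, c).
Proof.
elim=> [[x1 x2] [y1 y2] [Sx [Sy Adj]]|x|x m y _ IH1 _ IH2] r Hr /=.
- move: Adj Hr; rewrite /adjacent /=.
  case=> [[E _]|[E Hv]]; first by subst; lia.
  subst y2; case: Hv => Hv Hr.
    exists x2; have E1 : x1 = r by lia. have E2 : y1 = r.+1 by lia.
    by subst.
  exists x2; have E1 : y1 = r by lia. have E2 : x1 = r.+1 by lia.
  by subst.
- lia.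
- case: (leqP m.1 r) => Hm.
    case: Hr => Hr.
      apply: IH2; lia.
    apply: IH1; lia.
  case: Hr => Hr.
    apply: IH1; lia.
  apply: IH2; lia.
Qed.

Lemma shape_sum (lam mu : nat -> nat) i k n :
  (forall r, mu r <= lam r) ->
  (forall r, r < i \/ k < r -> mu r = lam r) ->
  (forall r, i <= r < k -> (mu r).+1 = lam r.+1) ->
  i <= k -> k < n ->
  \sum_(r < n) (lam r - mu r) + mu k = lam i + (k - i).
Proof.
move=> Hle Hout Hin Hik Hkn.
have Inner : forall d, d <= k - i ->
    \sum_(k - d <= r < k.+1) (lam r - mu r) + mu k = lam (k - d) + d.
  elim=> [|d IH] Hd.
    rewrite subn0 big_nat1; have := Hle k; lia.
  rewrite big_ltn; last lia.
  have -> : (k - d.+1).+1 = k - d by lia.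
  have E : (mu (k - d.+1)).+1 = lam (k - d).
    have -> : k - d = (k - d.+1).+1 by lia.
    apply: Hin; lia.
  have := IH ltac:(lia); have := Hle (k - d.+1); lia.
have := Inner (k - i) (leqnn _); have -> : k - (k - i) = i by lia.
move=> <-.
rewrite -(big_mkord xpredT (fun r => lam r - mu r)).
rewrite (@big_cat_nat _ _ _ i 0 n) //; last lia.
rewrite (@big_cat_nat _ _ _ k.+1 i n); [|lia|lia].
rewrite (@big1_seq _ _ _ _ (index_iota 0 i)); last first.
  move=> r /andP [_]; rewrite mem_index_iota => Hr; rewrite Hout; [lia|lia].
rewrite (@big1_seq _ _ _ _ (index_iota k.+1 n)); last first.
  move=> r /andP [_]; rewrite mem_index_iota => Hr; rewrite Hout; [lia|lia].
by rewrite /= add0n addn0.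
Qed.

Lemma strip_shape p la mu : 0 < p -> is_partition la -> is_partition mu ->
  border_strip p la mu ->
  exists i k, [/\ i <= k, k < size la,
    (forall r, r < i \/ k < r -> part mu r = part la r),
    (forall r, i <= r < k -> (part mu r).+1 = part la r.+1) &
    part mu k + p = part la i + (k - i)].
Proof.
move=> Hp Hla Hmu [Hle [Hsum [Hcon Hno]]].
have exR : exists r, part mu r < part la r.
  case: (boolP [exists r : 'I_(size la), part mu r < part la r]).
    by move/existsP => [r Hr]; exists r.
  move/existsPn => Hn; move: Hsum; rewrite big1; first lia.
  move=> r _; have := Hn r; have := Hle r; lia.
have bnd : forall r, part mu r < part la r -> r <= (size la).-1.
  move=> r Hr; case: (ltnP r (size la)) => H; first lia.
  by move: Hr; rewrite (part_size H).
case: (ex_minnP exR) => i Ri Hmin.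
case: (ex_maxnP exR bnd) => k Rk Hmax.
have Hik : i <= k by apply: Hmax.
have Hks : k < size la.
  case: (ltnP k (size la)) => // H; by move: Rk; rewrite (part_size H).
have Hout : forall r, r < i \/ k < r -> part mu r = part la r.
  move=> r Hr; case: (ltnP (part mu r) (part la r)) => H.
    have := Hmin _ H; have := Hmax _ H; lia.
  have := Hle r; lia.
have Hin : forall r, i <= r < k -> (part mu r).+1 = part la r.+1.
  move=> r Hr.
  have Sa : in_skew la mu (i, part mu i) by rewrite /in_skew /in_diagram /= ltnn andbT.
  have Sb : in_skew la mu (k, part mu k) by rewrite /in_skew /in_diagram /= ltnn andbT.
  have [c [S1 S2]] := cross (Hcon _ _ Sa Sb) (r := r) ltac:(left; simpl; lia).
  move: S1 S2; rewrite /in_skew /in_diagram /= -!leqNgt => /andP [A1 A2] /andP [A3 A4].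
  have M1 := part_mono Hla (leqnSn r).
  have M2 := part_mono Hmu (leqnSn r).
  case: (ltnP (part mu r).+1 (part la r.+1)) => H; last lia.
  exfalso; apply: (Hno r (part mu r)).
  rewrite /in_skew /in_diagram /=; split; [|split; [|split]]; apply/andP; split; lia.
have := shape_sum Hle Hout Hin Hik Hks.
rewrite Hsum => E.
by exists i, k; split => //; lia.
Qed.

Lemma mk_part (f : nat -> nat) n : (forall r, f r.+1 <= f r) -> f n = 0 ->
  exists mu, [/\ is_partition mu, (forall r, part mu r = f r) & size mu <= n].
Proof.
have mono : forall (g : nat -> nat), (forall r, g r.+1 <= g r) -> forall r r', r <= r' -> g r' <= g r.
  move=> g Hg r r' H; elim: r' H => [|r' IH] H; first by have -> : r = 0 by lia.
  case: (ltnP r r'.+1) => H2; last by have -> : r = r'.+1 by lia.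
  exact: leq_trans (Hg r') (IH ltac:(lia)).
elim: n f => [|n IH] f Hf Hn.
  exists [::]; split => // r; rewrite /part nth_nil; have := mono _ Hf 0 r (leq0n r); lia.
have [mu' [Hp' Hpart' Hs']] := IH (fun r => f r.+1) (fun r => Hf r.+1) Hn.
case: (posnP (f 0)) => H0.
  exists [::]; split => // r; rewrite /part nth_nil; have := mono _ Hf 0 r (leq0n r); lia.
exists (f 0 :: mu'); split => //.
- move: Hp'; rewrite /is_partition /= H0 /= => /andP [S A]; rewrite A andbT.
  case: mu' Hpart' S {A Hs'} => [|y s] Hpart' S //=.
  move: S; rewrite /= => ->; rewrite andbT; have := Hpart' 0; rewrite /part /= => ->; exact: Hf.
- by case=> [|r]; rewrite /part //= -Hpart'.
Qed.

Lemma strip_construct p la i k m : is_partition la -> i <= k -> k < size la ->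
  part la k.+1 <= m -> m < part la k -> part la i + (k - i) = m + p ->
  exists mu, remove_strip p la mu.
Proof.
move=> Hla Hik Hks Hm1 Hm2 Hsum.
pose f r := if r < i then part la r else if r < k then (part la r.+1).-1
            else if r == k then m else part la r.
have Mla : forall r r', r <= r' -> part la r' <= part la r by move=> r r'; apply: part_mono.
have Hout : forall r, r < i \/ k < r -> f r = part la r.
  move=> r Hr; rewrite /f; case: ifP => // H1; case: ifP => H2; first lia.
  case: ifP => // /eqP H3; lia.
have Hin : forall r, i <= r < k -> (f r).+1 = part la r.+1.
  move=> r Hr; rewrite /f; case: ifP => H1; first lia.
  case: ifP => H2; last lia.
  have := Mla r.+1 k ltac:(lia); lia.
have Hfk : f k = m.
  rewrite /f; case: ifP => H1; first lia; by rewrite ltnn eqxx.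
have Hle : forall r, f r <= part la r.
  move=> r; case: (ltnP r i) => H1; first by rewrite Hout //; left.
  case: (ltnP r k) => H2.
    have := Hin r ltac:(lia); have := Mla r r.+1 (leqnSn r); lia.
  case: (eqVneq r k) => [->|H3]; first lia.
  rewrite Hout //; right; lia.
have Hmono : forall r, f r.+1 <= f r.
  move=> r; case: (ltnP r.+1 i) => H1.
    rewrite !Hout; [exact: Mla|left; lia|left; lia].
  case: (eqVneq r.+1 i) => H2.
    rewrite (Hout r); last by left; lia.
    exact: leq_trans (Hle _) (Mla _ _ (leqnSn r)).
  case: (ltnP r.+1 k) => H3.
    have := Hin r ltac:(lia); have := Hin r.+1 ltac:(lia); have := Mla r.+1 r.+2 (leqnSn _); lia.
  case: (eqVneq r.+1 k) => H4.
    rewrite H4 Hfk; have := Hin r ltac:(lia); rewrite H4; lia.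
  case: (eqVneq r k) => H5.
    by rewrite H5 Hfk (Hout k.+1) //; right.
  rewrite !Hout; [exact: Mla|right; lia|right; lia].
have Hfs : f (size la) = 0 by rewrite Hout ?(part_size (leqnn _)) //; right.
have [mu [Hmu Hpart _]] := mk_part Hmono Hfs.
exists mu; split => //.
have Hle' : forall r, part mu r <= part la r by move=> r; rewrite Hpart.
have Hout' : forall r, r < i \/ k < r -> part mu r = part la r by move=> r; rewrite Hpart; apply: Hout.
have Hin' : forall r, i <= r < k -> (part mu r).+1 = part la r.+1 by move=> r; rewrite Hpart; apply: Hin.
have Ssk : forall r c, in_skew la mu (r, c) = (c < part la r) && (f r <= c).
  by move=> r c; rewrite /in_skew /in_diagram /= Hpart -leqNgt.
have Srow : forall r c, in_skew la mu (r, c) -> i <= r <= k.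
  move=> r c; rewrite Ssk => /andP [A1 A2].
  case: (ltnP r i) => H1; first by move: A2; rewrite Hout; [lia|left].
  case: (ltnP k r) => H2; first by move: A2; rewrite Hout; [lia|right].
  lia.
split => //; split.
  have := shape_sum Hle' Hout' Hin' Hik Hks; rewrite Hpart Hfk; lia.
split.
-
  pose R := fun x y => in_skew la mu x /\ in_skew la mu y /\ adjacent x y.
  have rowmove : forall r e c, c - f r = e -> in_skew la mu (r, c) ->
      clos_refl_trans _ R (r, c) (r, f r).
    move=> r; elim=> [|e IH] c He Sc.
      have -> : c = f r by move: Sc; rewrite Ssk; lia.
      exact: rt_refl.
    have Sc' : in_skew la mu (r, c.-1) by move: Sc; rewrite !Ssk; lia.
    apply: rt_trans (IH c.-1 ltac:(lia) Sc').
    apply: rt_step; split => //; split => //; left; simpl; split => //; right.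
    move: Sc; rewrite Ssk; lia.
  have reach : forall d r c, k - r = d -> in_skew la mu (r, c) ->
      clos_refl_trans _ R (r, c) (k, m).
    elim=> [|d IH] r c Hd Sc.
      have Er : r = k by have := Srow _ _ Sc; lia.
      subst r; rewrite -Hfk; exact: rowmove Sc.
    have Hr := Srow _ _ Sc.
    apply: rt_trans (rowmove r _ c erefl Sc) _.
    have E := Hin r ltac:(lia).
    have S1 : in_skew la mu (r, f r).
      rewrite Ssk leqnn andbT; have := Mla r r.+1 (leqnSn _); lia.
    have S2 : in_skew la mu (r.+1, f r).
      rewrite Ssk; have := Hmono r; lia.
    apply: rt_trans (IH r.+1 (f r) ltac:(lia) S2).
    apply: rt_step; split => //; split => //; right; simpl; split => //; left.
    done.
  move=> a b Sa Sb.
  case: a Sa => r1 c1 Sa; case: b Sb => r2 c2 Sb.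
  apply: rt_trans (reach _ _ _ erefl Sa) _.
  apply: crt_sym; last exact: (reach _ _ _ erefl Sb).
  move=> x y [Sx [Sy Ax]]; split => //; split => //.
  by case: Ax => [[E [H|H]]|[E [H|H]]]; [left|left|right|right]; split => //; [right|left|right|left].
-
  move=> r c [S1 [_ [_ S4]]].
  have := Srow _ _ S1; have := Srow _ _ S4 => H4 H1.
  move: S1 S4; rewrite !Ssk => /andP [_ A] /andP [B _].
  have := Hin r ltac:(lia); lia.
Qed.

Lemma strip_res p N la mu : 0 < p -> is_partition la -> is_partition mu ->
  size la <= N -> border_strip p la mu ->
  forall P : pred nat, count (fun x => P (x %% p)) (bseq N la) =
                       count (fun x => P (x %% p)) (bseq N mu).
Proof.
move=> Hp Hla Hmu HN Hb P.
have [i [k [Hik Hks Hout Hin Hk]]] := strip_shape Hp Hla Hmu Hb.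
have S1 : iota 0 N = iota 0 i ++ i :: iota i.+1 (k - i) ++ iota k.+1 (N - k.+1).
  have E : N = i + ((k - i).+1 + (N - k.+1)) by lia.
  rewrite {1}E !iotaD add0n /=.
  by have -> : i + (k - i).+1 = k.+1 by lia.
have S2 : iota 0 N = iota 0 i ++ iota i (k - i) ++ k :: iota k.+1 (N - k.+1).
  have E : N = i + ((k - i) + (N - k.+1).+1) by lia.
  rewrite {1}E !iotaD add0n /=.
  by have -> : i + (k - i) = k by lia.
rewrite /bseq {1}S1 S2 !map_cat !count_cat /=.
have E1 : map (beta N mu) (iota 0 i) = map (beta N la) (iota 0 i).
  apply/eq_in_map => r; rewrite mem_iota /= => Hr; rewrite /beta Hout //; left; lia.
have E2 : map (beta N mu) (iota k.+1 (N - k.+1)) = map (beta N la) (iota k.+1 (N - k.+1)).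
  apply/eq_in_map => r; rewrite mem_iota /= => Hr; rewrite /beta Hout //; right; lia.
have E3 : map (beta N mu) (iota i (k - i)) = map (beta N la) (iota i.+1 (k - i)).
  rewrite -[i.+1]add1n iotaDl -map_comp; apply/eq_in_map => r; rewrite mem_iota /= => Hr.
  rewrite /beta; have := Hin r ltac:(lia); rewrite add1n; lia.
have E4 : beta N mu k %% p = beta N la i %% p.
  have -> : beta N la i = beta N mu k + p by rewrite /beta; lia.
  by rewrite modnDr.
rewrite E1 E2 E3 E4 map_cat count_cat; lia.
Qed.

Lemma strip_size p la mu : is_partition mu -> border_strip p la mu -> size mu <= size la.
Proof.
move=> Hmu [Hle _]; case: (ltnP (size la) (size mu)) => // H.
have := part_pos Hmu H; have := Hle (size la); rewrite (part_size (leqnn _)); lia.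
Qed.

Lemma chain_inv p N x y : 0 < p -> clos_refl_trans _ (remove_strip p) x y ->
  is_partition x -> size x <= N ->
  [/\ is_partition y, size y <= N &
   forall P : pred nat, count (fun z => P (z %% p)) (bseq N x) =
                        count (fun z => P (z %% p)) (bseq N y)].
Proof.
move=> Hp; elim=> [a b [Hb Hs]|a|a b c _ IH1 _ IH2] Ha HN.
- split => //; first exact: leq_trans (strip_size Hb Hs) HN.
  exact: strip_res.
- by split.
- have [Hb HbN Eb] := IH1 Ha HN; have [Hc HcN Ec] := IH2 Hb HbN.
  by split => // P; rewrite Eb Ec.
Qed.

Lemma core_closed p N c : 0 < p -> is_partition c -> size c <= N ->
  ~ (exists mu, remove_strip p c mu) ->
  forall x, x \in bseq N c -> p <= x -> x - p \in bseq N c.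
Proof.
move=> Hp Hc HN Hno x Hx Hpx; apply/negPn/negP => Hg.
move: Hx => /mapP [i]; rewrite mem_iota /= => Hi Ex.
have G : x - p \in gaps N c i by rewrite mem_filter Hg mem_iota -Ex; lia.
rewrite -(perm_mem (perm_gaps Hc HN Hi)) in G.
move: G => /mapP [j]; rewrite mem_iota /= => Hj Eg.
have Hh := hook_gap Hc HN Hj; rewrite -Eg -Ex in Hh.
have Hic : i < conj_part c j by rewrite (conjP Hc).
have Hcs := conj_size c j.
apply: Hno; apply: (@strip_construct p c i (conj_part c j).-1 j) => //.
- lia.
- lia.
- have -> : (conj_part c j).-1.+1 = conj_part c j by lia.
  by rewrite leqNgt -(conjP Hc) ltnn.
- by rewrite -(conjP Hc); lia.
- move: Hh; rewrite /hook; lia.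
Qed.

Lemma prod_hl la N (P : pred nat) : size la <= N ->
  \prod_(i < size la) \prod_(j < part la i | P (hook la i j)) hook la i j =
  \prod_(x <- hl N la | P x) x.
Proof.
move=> HN; rewrite /hl big_flatten /= big_map.
have E : iota 0 N = iota 0 (size la) ++ iota (size la) (N - size la).
  by rewrite -{1}(subnKC HN) iotaD.
rewrite E big_cat /= (@big1_seq _ _ _ _ (iota (size la) (N - size la))) ?muln1; last first.
  move=> i /andP [_]; rewrite mem_iota => /andP [H _].
  by rewrite /hrow (part_size H) /= big_nil.
have -> : iota 0 (size la) = index_iota 0 (size la) by rewrite /index_iota subn0.
rewrite big_mkord; apply: eq_bigr => i _.
rewrite /hrow big_map.
have -> : iota 0 (part la i) = index_iota 0 (part la i) by rewrite /index_iota subn0.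
by rewrite big_mkord.
Qed.

Lemma down_closed (C : seq nat) p : 0 < p ->
  (forall x, x \in C -> p <= x -> x - p \in C) ->
  forall x w, x \in C -> w <= x -> w %% p = x %% p -> w \in C.
Proof.
move=> Hp Hcl x w Hx Hw Hm.
have /dvdnP [q Hq] : p %| x - w by rewrite -eqn_mod_dvd // Hm.
elim: q x Hx Hw Hq {Hm} => [|q IH] x Hx Hw Hq.
  by have -> : w = x by lia.
apply: (IH (x - p)); [apply: Hcl => //; lia| lia| lia].
Qed.

Lemma count_split_mod p (P : pred nat) s : 0 < p ->
  count P s = \sum_(r <- iota 0 p) count (fun x => (x %% p == r) && P x) s.
Proof.
move=> Hp; elim: s => [|x s IH] /=; first by rewrite big1.
rewrite big_split /= -IH; congr (_ + _).
have -> : \sum_(i <- iota 0 p) ((x %% p == i) && P x : nat) =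
          count (fun i => (x %% p == i) && P x) (iota 0 p).
  rewrite -sum1_count [RHS]big_mkcond /=; apply: eq_bigr => i _; by case: (_ && _).
case: (boolP (P x)) => Px.
  rewrite (@eq_count _ _ (pred1 (x %% p))); last by move=> i; rewrite andbT eq_sym.
  by rewrite count_uniq_mem ?iota_uniq // mem_iota /= ltn_pmod.
by rewrite (@eq_count _ _ pred0) ?count_pred0 // => i; rewrite andbF.
Qed.

Lemma count_le3 (T : Type) (a b c d : pred T) s :
  (forall x, (a x : nat) <= b x + c x + d x) ->
  count a s <= count b s + count c s + count d s.
Proof. move=> H; elim: s => //= y s IH; have := H y; lia. Qed.

Lemma count_ge3 (T : Type) (a b c d : pred T) s :
  (forall x, (b x : nat) + c x + d x <= a x) ->
  count b s + count c s + count d s <= count a s.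
Proof. move=> H; elim: s => //= y s IH; have := H y; lia. Qed.

Lemma count_filter_le (a b : pred nat) (s t : seq nat) (f : nat -> nat) :
  uniq s -> {in [seq x <- s | a x] &, injective f} ->
  (forall x, x \in s -> a x -> (f x \in t) && b (f x)) ->
  count a s <= count b t.
Proof.
move=> Us Inj Sub; rewrite -!size_filter.
rewrite -(size_map f); apply: uniq_leq_size.
  by rewrite map_inj_in_uniq // filter_uniq.
move=> y /mapP [x]; rewrite mem_filter => /andP [Ax Xs] ->.
by rewrite mem_filter; case/andP: (Sub x Xs Ax) => -> ->.
Qed.

Lemma count_ineq p h (B C : seq nat) : 0 < p -> uniq B -> uniq C ->
  (forall x, x \in C -> p <= x -> x - p \in C) ->
  (forall P : pred nat, count (fun z => P (z %% p)) B = count (fun z => P (z %% p)) C) ->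
  count (fun x => (h <= x) && (x - h \notin C)) C <=
  count (fun x => (h <= x) && (x - h \notin B)) B.
Proof.
move=> Hp UB UC Hcl Inv.
have DC := down_closed Hp Hcl.
rewrite !(count_split_mod _ _ Hp) big_seq [X in _ <= X]big_seq.
apply: leq_sum => r _.
set Q := fun x => x %% p == r.
set Q' := fun y => (y + h) %% p == r.
have EQ : count Q B = count Q C by exact: (Inv (fun z => z == r)).
have EQ' : count Q' B = count Q' C.
  have E : forall s, count Q' s = count (fun z => (z %% p + h) %% p == r) s.
    by move=> s; apply: eq_count => z; rewrite /Q' modnDml.
  by rewrite !E; exact: (Inv (fun z => (z + h) %% p == r)).
set XB := count _ B; set XC := count _ C.
have HB : count Q B <= count Q (iota 0 h) + XB + count Q' B.
  apply: leq_trans (count_le3 (b := fun x => Q x && (x < h))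
                               (c := fun x => (x %% p == r) && ((h <= x) && (x - h \notin B)))
                               (d := fun x => Q x && (h <= x) && (x - h \in B)) B _) _.
    move=> x; rewrite /Q; case: (x %% p == r) => //=; case: (ltnP x h) => //= _.
    by case: (x - h \in B).
  rewrite -/XB; apply: leq_add; first apply: leq_add => //.
    apply: (@count_filter_le _ _ _ _ id); [done|by move=> ? ? ? ? ->|].
    by move=> x _ /andP [Qx Hx]; rewrite mem_iota add0n Hx Qx.
  apply: (@count_filter_le _ _ _ _ (fun x => x - h)) => //.
    move=> x y; rewrite !mem_filter => /andP [/andP [/andP [_ H1] _] _] /andP [/andP [/andP [_ H2] _] _].
    lia.
  move=> x _ /andP [/andP [Qx H1] H2]; rewrite H2 /= /Q' subnK //.
have HC : 0 < XC -> XC + count Q (iota 0 h) + count Q' C <= count Q C.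
  move=> HX.
  have ex : exists x, (x \in C) && Q x && ((h <= x) && (x - h \notin C)).
    move: HX; rewrite /XC -has_count => /hasP [x Hx Px]; exists x.
    by rewrite Hx.
  case: (ex_minnP ex) => x0 /andP [/andP [X0C QX0] /andP [Hx0 Nx0]] Hmin.
  rewrite (_ : XC + _ + _ = count Q (iota 0 h) + count Q' C + XC); last lia.
  apply: leq_trans _ (count_ge3 (a := Q) (b := fun x => Q x && (x < h))
          (c := fun x => Q x && (h <= x) && (x < x0)) (d := fun x => Q x && (x0 <= x)) C _).
    apply: leq_add; first apply: leq_add.
    - apply: (@count_filter_le _ _ _ _ id); [exact: iota_uniq|by move=> ? ? ? ? ->|].
      move=> z; rewrite mem_iota /= => Hz Qz; rewrite Qz /=.
      rewrite (_ : z < h); last lia.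
      rewrite andbT; apply: (DC x0) => //; first lia.
      by rewrite /Q in Qz QX0; rewrite (eqP Qz) (eqP QX0).
    - apply: (@count_filter_le _ _ _ _ (fun y => y + h)) => //.
        by move=> y1 y2 _ _; lia.
      move=> y Hy Qy.
      have Lt : y + h < x0.
        case: (ltnP (y + h) x0) => // H; exfalso; move/negP: Nx0; apply.
        apply: (DC y) => //; first lia.
        apply/eqP; rewrite -(eqn_modDr h) subnK //.
        by rewrite /Q' in Qy; rewrite /Q in QX0; rewrite (eqP Qy) (eqP QX0).
      rewrite /Q; rewrite /Q' in Qy; rewrite Qy /= Lt andbT leq_addl andbT.
      apply: (DC x0) => //; first lia.
      by rewrite /Q in QX0; rewrite (eqP Qy) (eqP QX0).
    - apply: (@count_filter_le _ _ _ _ id); [done|by move=> ? ? ? ? ->|].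
      move=> x Hx /andP [Qx Px]; rewrite Hx /Q Qx /=; apply: Hmin.
      by rewrite Hx /Q Qx Px.
  move=> x; rewrite /Q; case: (x %% p == r) => //=.
  case: (ltnP x h) => H1 /=; first by rewrite (_ : x0 <= x = false) //; apply/negbTE; rewrite -ltnNge; lia.
  by case: (ltnP x x0).
case: (posnP XC) => H0; first by rewrite H0.
have := HC H0; move: HB; rewrite EQ EQ'; lia.
Qed.

Lemma prod_count_dvd (s t : seq nat) :
  (forall x, count_mem x s <= count_mem x t) ->
  \prod_(x <- s) x %| \prod_(x <- t) x.
Proof.
move/count_subseqP => [u Hsub Hperm].
have [v Hv] := perm_to_subseq Hsub.
rewrite (perm_big _ Hperm) (perm_big _ Hv) big_cat /=.
exact: dvdn_mulr.

Qed.

Unset Implicit Arguments.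

Theorem corollary7p3 (p : nat) (la core : seq nat) :
  2 <= p -> is_partition la -> is_pcore p la core ->
  Hprod core %| Hnonp p la.
Proof.
move=> Hp2 Hla [Hch Hno].
have Hp : 0 < p by lia.
set N := size la.
have [Hc HcN Inv] := chain_inv Hp Hch Hla (leqnn N).
have Hcl := core_closed Hp Hc HcN Hno.
have DC := down_closed Hp Hcl.
rewrite /Hprod (@prod_hl core N xpredT) // /Hnonp (@prod_hl la N (fun x => ~~ (p %| x))) //.
rewrite -[X in _ %| X]big_filter; apply: prod_count_dvd => h.
case: (posnP h) => Hh.
  subst h; have -> : count_mem 0 (hl N core) = 0; last by [].
  apply/eqP; rewrite eqn0Ngt -has_count; apply/hasPn => y Hy /=; have := hl_pos Hc HcN Hy; lia.
rewrite count_filter (count_hl Hc HcN Hh).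
case: (boolP (p %| h)) => Hph.
  rewrite [X in X <= _](@eq_in_count _ _ pred0) ?count_pred0 // => x Hx /=.
  apply/negbTE; rewrite negb_and negbK; case: (leqP h x) => //= Hhx.
  apply: (DC x) => //; first exact: leq_subr.
  apply/eqP; rewrite eq_sym eqn_mod_dvd ?leq_subr // (subKn Hhx) //.
rewrite (@eq_count _ _ (pred1 h)); last first.
  move=> x /=; case: (eqVneq x h) => [->|] //=; by rewrite Hph.
rewrite (count_hl Hla (leqnn N) Hh).
exact: (count_ineq h Hp (uniq_B Hla (leqnn N)) (uniq_B Hc HcN) Hcl Inv).

Qed.
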